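(* Let $I,J$ be finite sets and $E\subseteq I\times J$, with $J_i=\{j:(i,j)\in E\}$ and $I_j=\{i:(i,j)\in E\}$, and let $\lambda_i>0$ for $i\in I$. Let $p(\rho)=\min\{2\rho,1\}$. Suppose that nonnegative numbers $(x_{ij})_{(i,j)\in E}$, $(y_{ij})_{(i,j)\in E}$ and $(\Delta_j)_{j\in J}$ satisfy the following conditions: (i) $x_i:=\sum_{j\in J_i}x_{ij}\le\lambda_i$ for every $i$; (ii) $\sum_{j\in J_i}y_{ij}=\lambda_i\,p(x_i/\lambda_i)$ for every $i$; (iii) $\lambda_i p(x_i/\lambda_i)-\lambda_i p\big((x_i-x_{ij})/\lambda_i\big)\le y_{ij}\le\min\{2x_{ij},\lambda_i\}$ for every $(i,j)\in E$; (iv) $\Delta_j\le 1-\ln 2$ for every $j$. Let $y_j=\sum_{i\in I_j}y_{ij}$ and $\Delta_{ij}=(2x_{ij}-\lambda_i)^+$; no relation between $\Delta_j$ and $\sum_i\Delta_{ij}$ is assumed. Then \[ \sum_{j\in J}(2-\Delta_j)\sum_{i\in I_j}\Big(\lambda_i p\Big(\tfrac{x_i}{\lambda_i}\Big)-\lambda_i p\Big(\tfrac{x_i-x_{ij}}{\lambda_i}\Big)-\Delta_{ij}\Big)+\sum_{j\in J}y_j(\Delta_j-1+\ln 2)\ \le\ (2+2\ln 2)\sum_{(i,j)\in E}(y_{ij}-x_{ij}). \]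
   Context: $z^+=\max\{z,0\}$. *)

(* Defs.v *)
From HB Require Import structures.
From mathcomp Require Import all_boot all_order all_algebra.
From mathcomp Require Import reals exp.
Set Implicit Arguments. Unset Strict Implicit. Unset Printing Implicit Defensive.
Import Order.TTheory GRing.Theory Num.Theory.
Local Open Scope ring_scope.

Definition pfun (R : realType) (rho : R) : R := Num.min (2 * rho) 1.

Definition posp (R : realType) (z : R) : R := Num.max z 0.

Definition rowsum (R : realType) (I J : finType) (E : {set I * J})
  (x : I -> J -> R) (i : I) : R := \sum_(j : J | (i, j) \in E) x i j.

Definition colsum (R : realType) (I J : finType) (E : {set I * J})
  (y : I -> J -> R) (j : J) : R := \sum_(i : I | (i, j) \in E) y i j.

(* Main.v *)
Require Import Defs.
From HB Require Import structures.
From mathcomp Require Import all_boot all_order all_algebra.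
From mathcomp Require Import reals exp ring lra.
Import Order.TTheory GRing.Theory Num.Theory.
Local Open Scope ring_scope.


Lemma fE {R : realType} (lam t : R) : 0 < lam -> lam * pfun (t / lam) = Num.min (2 * t) lam.
Proof.
move=> hl; rewrite /pfun minr_pMr ?ltW // mulr1.
have -> : lam * (2 * (t / lam)) = 2*t by field; rewrite gt_eqF.
done.
Qed.

Lemma posE {R : realType} (t : R) : posp t = Num.max t 0. Proof. by []. Qed.

Lemma superadd {R : realType} (a b c : R) : 0 <= a -> 0 <= b -> 0 <= c ->
  posp (2*a - c) + posp (2*b - c) <= posp (2*(a+b) - c).
Proof.
move=> ha hb hc; rewrite /posp.
case: (lerP (2*a-c) 0) => h1; case: (lerP (2*b-c) 0) => h2;
case: (lerP (2*(a+b)-c) 0) => h3; lra.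
Qed.

Lemma term_small {R : realType} (X lam t : R) : 0 <= t -> t <= X -> 2 * X <= lam ->
  Num.min (2*X) lam - Num.min (2*(X-t)) lam - posp (2*t - lam) <= 2 * t.
Proof.
move=> ht htX hX; rewrite /posp.
case: (lerP (2*X) lam) => h1; case: (lerP (2*(X-t)) lam) => h2;
case: (lerP (2*t-lam) 0) => h3; lra.
Qed.

Lemma term_big1 {R : realType} (X lam t : R) : 0 <= t -> t <= X -> lam < 2 * X ->
  lam - Num.min (2*(X-t)) lam - posp (2*t - lam)
  <= posp (2*t - (2*X - lam)).
Proof.
move=> ht htX hX; rewrite /posp.
case: (lerP (2*X) lam) => h1; case: (lerP (2*(X-t)) lam) => h2;
case: (lerP (2*t-lam) 0) => h3; case: (lerP (2*t-(2*X-lam)) 0) => h4; lra.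
Qed.

Lemma term_big2 {R : realType} (X lam t : R) : 0 <= t -> t <= X -> lam < 2 * X -> X <= lam ->
  lam - Num.min (2*(X-t)) lam - posp (2*t - lam)
  <= 2 * lam - 2 * X.
Proof.
move=> ht htX hX hXl; rewrite /posp.
case: (lerP (2*X) lam) => h1; case: (lerP (2*(X-t)) lam) => h2;
case: (lerP (2*t-lam) 0) => h3; lra.
Qed.

Lemma fin_comb {R : realType} (X lam t s : R) : lam < 2 * X -> X <= lam -> 2 * t > 2*X - lam ->
  s <= 2 * lam - 2 * X -> s <= posp (2*t - (2*X - lam)) ->
  s + posp (2*(X - t) - (2*X - lam)) <= 2 * lam - 2 * X.
Proof.
move=> h1 h2 h3; rewrite /posp.
case: (lerP (2*t - (2*X-lam)) 0) => h4;
case: (lerP (2*(X-t) - (2*X-lam)) 0) => h6; lra.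
Qed.

Lemma sup_sum {R : realType} (J : finType) (P : pred J) (x : J -> R) c : 0 <= c ->
  (forall j, P j -> 0 <= x j) ->
  \sum_(j | P j) posp (2 * x j - c) <= posp (2 * \sum_(j | P j) x j - c).
Proof.
move=> hc hx.
have [] := @big_rec2 _ _ (fun s1 s2 => s1 <= posp (2*s2 - c) /\ 0 <= s2) 0 +%R 0 +%R
  _ _ (index_enum J) P (fun j => posp (2 * x j - c)) x; last by [].
  split => //; rewrite /posp; case: (lerP (2*0-c) 0) => h; lra.
move=> j s1 s2 Pj [h1 h2]; split; last by have := hx j Pj; lra.
have := superadd _ _ _ (hx j Pj) h2 hc; rewrite /=; lra.
Qed.

Lemma per_i {R : realType} (J : finType) (P : pred J) (x : J -> R) lam :
  0 < lam -> (forall j, P j -> 0 <= x j) -> \sum_(j | P j) x j <= lam ->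
  \sum_(j | P j) (Num.min (2 * \sum_(j | P j) x j) lam
      - Num.min (2 * (\sum_(j | P j) x j - x j)) lam - posp (2 * x j - lam))
  <= 2 * Num.min (2 * \sum_(j | P j) x j) lam - 2 * \sum_(j | P j) x j.
Proof.
move=> hl hx.
set X := \sum_(j | P j) x j => hXl.
have xle : forall j, P j -> x j <= X.
  move=> j Pj; rewrite /X (bigD1 j) //= lerDl sumr_ge0 // => i /andP[Pi _].
  exact: hx.
case: (boolP (2 * X <= lam)) => hX.
  apply: le_trans (_ : \sum_(j | P j) 2 * x j <= _).
    by apply: ler_sum => j Pj; apply: term_small => //; [exact: hx | exact: xle].
  rewrite -mulr_sumr -/X (min_l hX); lra.
rewrite -ltNge in hX.
have Hm : Num.min (2 * X) lam = lam by rewrite min_r // ltW.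
rewrite Hm.
have X0 : 0 <= X by rewrite /X sumr_ge0.
case: (pickP (fun j => P j && (2*X - lam < 2 * x j))) => [js /andP[Pjs hjs] | hnone].
  rewrite (bigD1 js) //=.
  have hXs : X - x js = \sum_(j | P j && (j != js)) x j.
    by rewrite /X (bigD1 js) //=; lra.
  have H2 : \sum_(j | P j && (j != js)) (lam - Num.min (2 * (X - x j)) lam - posp (2 * x j - lam))
     <= posp (2 * (X - x js) - (2 * X - lam)).
    apply: le_trans (_ : \sum_(j | P j && (j != js)) posp (2 * x j - (2 * X - lam)) <= _).
      apply: ler_sum => j /andP[Pj _]; apply: term_big1 => //; [exact: hx | exact: xle].
    rewrite hXs; apply: sup_sum; first lra.
    by move=> j /andP[Pj _]; exact: hx.
  apply: le_trans (lerD (lexx _) H2) _.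
  apply: fin_comb => //.
    by apply: term_big2 => //; [exact: hx | exact: xle].
  by apply: term_big1 => //; [exact: hx | exact: xle].
apply: le_trans (_ : \sum_(j | P j) (0:R) <= _).
  apply: ler_sum => j Pj.
  have := hnone j; rewrite Pj /= => /negbT; rewrite -leNgt => hj.
  apply: le_trans (term_big1 _ _ _ (hx j Pj) (xle j Pj) hX) _.
  by rewrite /posp max_r //; lra.
rewrite big1 //; lra.
Qed.

Theorem mainTheorem5 (R : realType) (I J : finType) (E : {set I * J})
  (lam : I -> R) (x y : I -> J -> R) (D : J -> R) :
  (forall i, 0 < lam i) ->
  (forall i j, (i, j) \in E -> 0 <= x i j) ->
  (forall i j, (i, j) \in E -> 0 <= y i j) ->
  (forall j, 0 <= D j) ->
  (* (i) *)
  (forall i, rowsum E x i <= lam i) ->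
  (* (ii) *)
  (forall i, \sum_(j : J | (i, j) \in E) y i j
             = lam i * pfun (rowsum E x i / lam i)) ->
  (* (iii) *)
  (forall i j, (i, j) \in E ->
     lam i * pfun (rowsum E x i / lam i)
       - lam i * pfun ((rowsum E x i - x i j) / lam i) <= y i j /\
     y i j <= Num.min (2 * x i j) (lam i)) ->
  (* (iv) *)
  (forall j, D j <= 1 - ln 2) ->
  \sum_(j : J) (2 - D j) *
      \sum_(i : I | (i, j) \in E)
        (lam i * pfun (rowsum E x i / lam i)
         - lam i * pfun ((rowsum E x i - x i j) / lam i)
         - posp (2 * x i j - lam i))
    + \sum_(j : J) colsum E y j * (D j - 1 + ln 2)
  <= (2 + 2 * ln 2) * \sum_(e in E) (y e.1 e.2 - x e.1 e.2).

Proof.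
move=> hl hx hy hD0 hi hii hiii hiv.
set a := fun i j => lam i * pfun (rowsum E x i / lam i)
         - lam i * pfun ((rowsum E x i - x i j) / lam i) - posp (2 * x i j - lam i).
have ln2 : 0 <= ln (2:R) by apply: ln_ge0; lra.
have Hsplit : forall F : I -> J -> R, \sum_(e in E) F e.1 e.2
   = \sum_i \sum_(j | (i, j) \in E) F i j.
  move=> F; rewrite pair_big_dep /=; apply: eq_bigl => -[i j] //.
have Hex : forall F : I -> J -> R, \sum_j \sum_(i | (i, j) \in E) F i j
   = \sum_i \sum_(j | (i, j) \in E) F i j.
  by move=> F; rewrite (exchange_big_dep xpredT) //.
apply: le_trans (_ : \sum_j \sum_(i | (i, j) \in E) (1 + ln 2) * a i j <= _).
  rewrite -big_split /=; apply: ler_sum => j _.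
  rewrite mulr_sumr /colsum mulr_suml -big_split /=; apply: ler_sum => i hij.
  have [h1 _] := hiii i j hij.
  have hp : 0 <= posp (2 * x i j - lam i) by rewrite /posp le_max lexx orbT.
  have hya : a i j <= y i j by rewrite /a; lra.
  have hd := hiv j.
  have : 0 <= (y i j - a i j) * (1 - ln 2 - D j) by apply: mulr_ge0; lra.
  rewrite -/(a i j); nra.
rewrite (Hex (fun i j => (1 + ln 2) * a i j)) (Hsplit (fun i j => y i j - x i j)) /=.
have -> : 2 + 2 * ln (2:R) = (1 + ln 2) * 2 by ring.
rewrite mulr_sumr; apply: ler_sum => i _.
rewrite -mulr_sumr -mulrA; apply: ler_wpM2l; first lra.
rewrite [X in _ <= 2 * X]sumrB hii.
have := @per_i R J (fun j => (i, j) \in E) (x i) (lam i) (hl i) (hx i) (hi i).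
rewrite -/(rowsum E x i) /a !fE //.
move=> H; under eq_bigr => j _ do rewrite fE //.
apply: le_trans H _; rewrite /rowsum; lra.
Qed.
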